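(* Let $P$ be an isothetic drawing of the Horton set of $n=2^k$ points with tree $T$, and let $1\le l\le k-1$. Let $P'$ be the result of pruning the $l$-th level of $T$ (see context). Then: (1) $P'$ is an isothetic drawing of the Horton set of $n/2$ points. (2) Suppose $l\le k-3$, and let $T'$ be the tree associated to $P'$. Let $Q'$ be a vertex of the $l'$-th level of $T'$ for some $l'>l$. Then there exists a vertex $Q$ in the $(l'+1)$-th level of $T$ with $Q'\subseteq Q$; moreover, whenever $S(Q')$ is defined (i.e. $Q'$ is not the root of $T'$ and has more than two points), $S(Q')\subseteq S(Q)$.
   Context: For a finite set $S$ of points in the plane with pairwise distinct $x$-coordinates, list its points in increasing order of $x$-coordinate as $p_0,\dots,p_{|S|-1}$ and set $S_{\mathrm{even}}=\{p_0,p_2,\dots\}$, $S_{\mathrm{odd}}=\{p_1,p_3,\dots\}$. For point sets $X,Y$, $X$ is high above $Y$ if every line through two points of $X$ lies strictly above every point of $Y$ and every line through two points of $Y$ lies strictly below every point of $X$. A Horton set of $2^k$ points is defined recursively: a set $H$ of $2^k$ points, no three collinear, with pairwise distinct $x$-coordinates, such that for $k=0$ it is a single point and for $k\ge1$ both $H_{\mathrm{even}}$ and $H_{\mathrm{odd}}$ are Horton sets of $2^{k-1}$ points and $H_{\mathrm{odd}}$ is high above $H_{\mathrm{even}}$. An isothetic drawing of the Horton set of $n=2^k$ points is a Horton set of $n$ points all of whose points have integer coordinates. For such a $P$, the tree $T$ is the complete rooted binary tree with root $P$ in which every vertex $Q$ with at least two points has left child $Q_{\mathrm{even}}$ and right child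 $Q_{\mathrm{odd}}$; the $i$-th level of $T$ is the set of its vertices consisting of exactly $2^i$ points. Pruning the $l$-th level of $T$ means removing from $P$ all points belonging to the vertices of the $l$-th level that are left children of their parent, or alternatively all points belonging to the vertices of the $l$-th level that are right children of their parent (either choice). For a non-root vertex $Q$ with more than two points, $S(Q)$ denotes the right child of $Q$ if $Q$ is the left child of its parent, and the left child of $Q$ otherwise (and analogously in $T'$). *)

(* Defs.v *)
From HB Require Import structures.
From mathcomp Require Import all_boot all_order all_algebra.
Set Implicit Arguments. Unset Strict Implicit. Unset Printing Implicit Defensive.
Import Order.TTheory GRing.Theory Num.Theory.
Local Open Scope ring_scope.

Definition pt := (int * int)%type.

(* finite point sets are represented by duplicate-free sequences; set
   operations are understood extensionally (via membership) *)

(* orientation: for p.1 < q.1, cross p q r > 0 iff r lies strictly above the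
   line through p and q, and < 0 iff r lies strictly below it *)
Definition cross (p q r : pt) : int :=
  (q.1 - p.1) * (r.2 - p.2) - (q.2 - p.2) * (r.1 - p.1).

Definition distinct_x (S : seq pt) : bool := uniq (map fst S).

Definition no_three_collinear (S : seq pt) : Prop :=
  forall p q r, p \in S -> q \in S -> r \in S ->
    p != q -> q != r -> p != r -> cross p q r != 0.

Definition high_above (X Y : seq pt) : Prop :=
  (forall p q r, p \in X -> q \in X -> r \in Y -> p.1 < q.1 -> cross p q r < 0) /\
  (forall p q r, p \in Y -> q \in Y -> r \in X -> p.1 < q.1 -> 0 < cross p q r).

Definition xsort (S : seq pt) : seq pt := sort (fun p q : pt => p.1 <= q.1) S.

Fixpoint evens (s : seq pt) : seq pt :=
  match s with
  | x :: _ :: t => x :: evens t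
  | [:: x] => [:: x]
  | [::] => [::]
  end.

Definition S_even (S : seq pt) : seq pt := evens (xsort S).
Definition S_odd (S : seq pt) : seq pt := evens (behead (xsort S)).

Fixpoint horton (k : nat) (H : seq pt) : Prop :=
  [/\ size H = (2 ^ k)%N, uniq H, distinct_x H, no_three_collinear H &
      match k with
      | 0 => True
      | k'.+1 => [/\ horton k' (S_even H), horton k' (S_odd H)
                   & high_above (S_odd H) (S_even H)]
      end].

(* An isothetic drawing of the Horton set of 2^k points: a Horton set of 2^k
   points with integer coordinates (integrality is built into [pt]). *)
Definition isothetic_horton (k : nat) (P : seq pt) : Prop := horton k P.

(* child of a vertex: false = left child (even part), true = right child (odd part) *)
Definition child (c : bool) (Q : seq pt) : seq pt := if c then S_odd Q else S_even Q.

(* vertices of the tree T of P are addressed by root-to-vertex paths;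
   for P of 2^k points, a path of length k - i addresses a vertex of level i *)
Fixpoint vertex (P : seq pt) (b : seq bool) : seq pt :=
  match b with
  | [::] => P
  | c :: b' => vertex (child c P) b'
  end.

(* S(Q) for the (non-root) vertex Q with path b: the right child of Q if Q is
   a left child of its parent, the left child of Q otherwise *)
Definition Svert (P : seq pt) (b : seq bool) : seq pt :=
  vertex P (rcons b (~~ last false b)).

(* Pruning level l of the tree of P (P of 2^k points): remove all points of
   the level-l vertices that are left children (c = false) or all that are
   right children (c = true) of their parents. *)
Definition prune (k l : nat) (c : bool) (P : seq pt) : seq pt :=
  [seq p <- P | ~~ [exists b : (k - l).-tuple bool,
                     (last false b == c) && (p \in vertex P b)]].

(* Main.v *)
Require Import Defs.
From HB Require Import structures.
From mathcomp Require Import all_boot all_order all_algebra.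
Set Implicit Arguments. Unset Strict Implicit. Unset Printing Implicit Defensive.
Import Order.TTheory.

Definition leX : rel pt := fun p q : pt => (p.1 <= q.1)%R.
Lemma xsortE H : xsort H = sort leX H. Proof. by []. Qed.
Lemma leX_total : total leX. Proof. by move=> p q; rewrite /leX le_total. Qed.
Lemma leX_trans : transitive leX. Proof. by move=> p q r; rewrite /leX; apply: le_trans. Qed.

Fixpoint sel (f : nat -> bool) (t : seq pt) : seq pt :=
  match t with
  | [::] => [::]
  | x :: t' => if f 0 then x :: sel (fun i => f i.+1) t' else sel (fun i => f i.+1) t'
  end.

Lemma eq_sel f g t : f =1 g -> sel f t = sel g t.
Proof.
elim: t f g => [|x t IH] f g fg //=.
by rewrite fg (IH (fun i => f i.+1) (fun i => g i.+1)).
Qed.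

Lemma sel_subseq f t : subseq (sel f t) t.
Proof.
elim: t f => [|x t IH] f //=; case: (f 0) => /=; first by rewrite eqxx IH.
exact: subseq_trans (IH _) (subseq_cons _ _).
Qed.

Lemma sel_true t : sel (fun _ => true) t = t.
Proof. by elim: t => //= x t IH; rewrite IH. Qed.

Lemma size_sel f t : size (sel f t) + size (sel (fun i => ~~ f i) t) = size t.
Proof.
elim: t f => [|x t IH] f //=; case: (f 0) => /=; rewrite ?addSn ?addnS IH //.
Qed.

Lemma count_iotaS (p : pred nat) i :
  count p (iota 0 i.+1) = p 0 + count (fun j => p j.+1) (iota 0 i).
Proof. by rewrite /= -add1n iotaDl count_map. Qed.

Lemma count_iota1 (p : pred nat) i :
  count p (iota 1 i) = count (fun j => p j.+1) (iota 0 i).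
Proof. by rewrite -add1n iotaDl count_map. Qed.

Lemma sel_sel p q u :
  sel q (sel p u) = sel (fun i => p i && q (count p (iota 0 i))) u.
Proof.
elim: u p q => [|x u IH] p q //=.
case: (p 0) => /=.
  case: (q 0) => /=; rewrite IH; (congr (_ :: _) || idtac);
  apply: eq_sel => i; by rewrite count_iota1 add1n.
rewrite IH; apply: eq_sel => i; by rewrite count_iota1.
Qed.

Lemma evens_cons x u : evens (x :: u) = x :: evens (behead u).
Proof. by case: u. Qed.

Lemma evens_sel u : evens u = sel (fun i => ~~ odd i) u /\ sel odd u = evens (behead u).
Proof.
elim: u => [|x u [IH1 IH2]] //; split.
  rewrite evens_cons -IH2 /=; congr (_ :: _); apply: eq_sel => i /=; by rewrite negbK.
by rewrite IH1 /=.
Qed.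

Lemma evensE u : evens u = sel (fun i => ~~ odd i) u. Proof. by case: (evens_sel u). Qed.
Lemma evensbE u : evens (behead u) = sel odd u. Proof. by case: (evens_sel u). Qed.

Lemma count_even i : count (fun j => ~~ odd j) (iota 0 i) = uphalf i.
Proof.
elim: i => // i IH; rewrite -addn1 iotaD count_cat IH /= add0n addn0 addn1.
rewrite uphalf_half /=; by case: (odd i); rewrite /= ?addn0 ?addn1 ?add0n.
Qed.

Lemma count_odd i : count odd (iota 0 i) = i./2.
Proof.
elim: i => // i IH; rewrite -addn1 iotaD count_cat IH /= add0n addn0 addn1.
change (i./2 + odd i = uphalf i); by rewrite uphalf_half addnC.
Qed.

Definition pr m c t := sel (fun i => odd (i %/ 2 ^ m) != c) t.

Lemma parity m c i :
  odd (count (fun j => odd (j %/ 2 ^ m.+1) != c) (iota 0 i)) =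
  (odd (i %/ 2 ^ m.+1) != c) && odd i.
Proof.
elim: i => [|i IH]; first by rewrite /= andbF.
rewrite -(addn1 i) iotaD count_cat oddD IH /= add0n addn0 addn1.
rewrite oddb; case oi: (odd i) => /=.
  by rewrite oi andbT andbF addbb.
rewrite oi andbF andbT addFb divnS ?expn_gt0 //.
have -> : (2 ^ m.+1 %| i.+1) = false.
  apply/negP; rewrite expnS => H.
  have := dvdn_trans (dvdn_mulr (2 ^ m) (dvdnn 2)) H.
  by rewrite dvdn2 /= oi.
by rewrite add0n.
Qed.

Lemma div2E i m : i %/ 2 ^ m.+1 = i./2 %/ 2 ^ m.
Proof. by rewrite expnS divnMA divn2. Qed.

Lemma evens_pr m c u : evens (pr m.+1 c u) = pr m c (evens u).
Proof.
rewrite /pr !evensE !sel_sel; apply: eq_sel => i.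
rewrite parity count_even uphalf_half div2E.
by case: (odd i) => /=; rewrite ?add0n; case: (odd (_ %/ _) != c).
Qed.

Lemma odds_pr m c u : evens (behead (pr m.+1 c u)) = pr m c (evens (behead u)).
Proof.
rewrite /pr !evensbE !sel_sel; apply: eq_sel => i.
rewrite parity count_odd div2E.
by case: (odd i) => /=; case: (odd (_ %/ _) != c).
Qed.

Lemma sorted_xsort H : sorted leX (xsort H).
Proof. rewrite xsortE. exact: (@sort_sorted pt leX leX_total H). Qed.

Lemma xsort_id t : sorted leX t -> xsort t = t.
Proof. rewrite xsortE. exact: (@sorted_sort pt leX leX_trans t). Qed.

Lemma sel_sorted f t : sorted leX t -> sorted leX (sel f t).
Proof. exact: (@subseq_sorted _ leX leX_trans _ _ (sel_subseq f t)). Qed.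

Lemma evens_sorted t : sorted leX t -> sorted leX (evens t).
Proof. by rewrite evensE; apply: sel_sorted. Qed.

Lemma evensb_sorted t : sorted leX t -> sorted leX (evens (behead t)).
Proof. by rewrite evensbE; apply: sel_sorted. Qed.

Lemma child_sortedE d t : sorted leX t ->
  child d t = if d then evens (behead t) else evens t.
Proof. by move=> st; rewrite /child /S_odd /S_even xsort_id. Qed.

Lemma child_sorted d H : sorted leX (child d H).
Proof.
by case: d; rewrite /child /S_odd /S_even; [apply: evensb_sorted|apply: evens_sorted];
  apply: sorted_xsort.
Qed.

Lemma vertex_xsort H b : b != [::] -> vertex H b = vertex (xsort H) b.
Proof.
case: b => // d b _ /=; congr vertex.
by rewrite /child /S_odd /S_even (xsort_id (sorted_xsort H)).
Qed.

Lemma pr_sorted m c t : sorted leX t -> sorted leX (pr m c t).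
Proof. exact: sel_sorted. Qed.

Lemma child_pr d m c t : sorted leX t -> child d (pr m.+1 c t) = pr m c (child d t).
Proof.
move=> st; rewrite !child_sortedE ?pr_sorted //.
by case: d; [apply: odds_pr | apply: evens_pr].
Qed.

Lemma vertex_pr_sub c b : forall m t, sorted leX t -> (size b <= m)%N ->
  {subset vertex (pr m c t) b <= vertex t b}.
Proof.
elim: b => [|d b IH] m t st /=.
  move=> _ x; exact: (mem_subseq (sel_subseq _ _)).
case: m => // m; rewrite ltnS => sb.
rewrite child_pr //; apply: IH => //; apply: child_sorted.
Qed.

Fixpoint mt (b : seq bool) (i : nat) : bool :=
  match b with [::] => true | d :: b' => (odd i == d) && mt b' i./2 end.

Lemma count_oddeq d i :
  count (fun j => odd j == d) (iota 0 i) = if d then i./2 else uphalf i.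
Proof.
case: d; rewrite -?count_odd -?count_even; apply: eq_count => j /=; by rewrite ?eqbF_neg ?eqb_id.
Qed.

Lemma vertex_sel b : forall t, sorted leX t -> vertex t b = sel (mt b) t.
Proof.
elim: b => [|d b IH] t st /=; first by rewrite sel_true.
rewrite IH ?child_sorted // child_sortedE //.
have -> : (if d then evens (behead t) else evens t) = sel (fun i => odd i == d) t.
  case: d; rewrite ?evensbE ?evensE; apply: eq_sel => i /=; by rewrite ?eqbF_neg ?eqb_id.
rewrite sel_sel; apply: eq_sel => i; rewrite count_oddeq.
case: d; case oi: (odd i) => //=.
by rewrite uphalf_half oi.
Qed.

Lemma mem_sel f t x : uniq t -> (x \in sel f t) = (x \in t) && f (index x t).
Proof.
elim: t f => [|y t IH] f //= /andP [yt ut].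
rewrite in_cons; case: (eqVneq x y) => [->|xy] /=.
  case: (f 0); rewrite ?in_cons ?eqxx //.
  by apply/negP => /(mem_subseq (sel_subseq _ _)); rewrite (negPf yt).
case: (f 0); rewrite ?in_cons ?(negPf xy) /= IH //.
Qed.

Lemma filter_idx f t : uniq t -> filter (fun x => f (index x t)) t = sel f t.
Proof.
elim: t f => [|y t IH] f //= /andP [yt ut].
rewrite eqxx -(IH (fun i => f i.+1)) //.
have -> : [seq x <- t | f (if y == x then 0 else (index x t).+1)] =
          [seq x <- t | f (index x t).+1].
  apply: eq_in_filter => x xt.
  by have -> : (y == x) = false by apply/eqP => yx; rewrite yx xt in yt.
by [].
Qed.

Fixpoint bits n i : seq bool :=
  match n with 0 => [::] | n'.+1 => odd i :: bits n' i./2 end.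

Lemma size_bits n i : size (bits n i) = n.
Proof. by elim: n i => //= n IH i; rewrite IH. Qed.

Lemma mt_bits b i : mt b i = (b == bits (size b) i).
Proof. by elim: b i => //= d b IH i; rewrite IH eqseq_cons eq_sym. Qed.

Lemma last_bits n i x : last x (bits n.+1 i) = odd (i %/ 2 ^ n).
Proof.
elim: n i x => [|n IH] i x /=; first by rewrite expn0 divn1.
by have := IH i./2 (odd i); rewrite /= => ->; rewrite div2E.
Qed.

Lemma exists_bits m c i :
  [exists b : m.+1.-tuple bool, (last false b == c) && mt b i] = (odd (i %/ 2 ^ m) == c).
Proof.
apply/existsP/idP.
  case=> b /andP [lb]; rewrite mt_bits size_tuple => /eqP eb.
  by rewrite -(last_bits m i false) -eb.
move=> h.
have sz : size (bits m.+1 i) == m.+1 by rewrite size_bits.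
have e : (last false (bits m.+1 i) == c) && mt (bits m.+1 i) i.
  by rewrite last_bits h /= mt_bits size_bits !eqxx.
by exists (@Tuple m.+1 bool (bits m.+1 i) sz).
Qed.

Lemma uniq_map_inj (f : pt -> int) s : uniq (map f s) -> {in s &, injective f}.
Proof.
elim: s => [|y s IH] //= /andP [fy us] p q; rewrite !in_cons.
case/orP=> [/eqP ->|ps]; case/orP=> [/eqP ->|qs] //.
- by move=> e; rewrite e in fy; rewrite (map_f f qs) in fy.
- by move=> e; rewrite -e in fy; rewrite (map_f f ps) in fy.
- exact: IH.
Qed.

Lemma xsort_perm H H' : distinct_x H -> perm_eq H H' -> xsort H = xsort H'.
Proof.
move=> dx pH; rewrite !xsortE; apply/perm_sort_inP => //.
- by move=> p q _ _; apply: leX_total.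
- by move=> p q r _ _ _; apply: leX_trans.
move=> p q pH' qH /andP [h1 h2].
apply: (uniq_map_inj dx) => //.
by apply/eqP; rewrite eq_le; apply/andP; split.
Qed.

Lemma horton_perm j H H' : horton j H -> perm_eq H H' -> horton j H'.
Proof.
move=> hH pH; case: j hH => [|j] [sH uH dH nH rest];
  (split; [ by rewrite -(perm_size pH)
          | by rewrite -(perm_uniq pH)
          | by rewrite /distinct_x -(perm_uniq (perm_map fst pH))
          | by move=> p q r; rewrite -!(perm_mem pH); apply: nH
          | idtac ]) => //.
by rewrite /S_even /S_odd -(xsort_perm dH pH).
Qed.

Lemma high_above_sub X Y X' Y' : {subset X' <= X} -> {subset Y' <= Y} ->
  high_above X Y -> high_above X' Y'.
Proof.
move=> sX sY [h1 h2]; split=> p q r pX qX rY.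
  by apply: h1; [apply: sX | apply: sX | apply: sY].
by apply: h2; [apply: sY | apply: sY | apply: sX].
Qed.

Lemma size_evens u : size (evens u) + size (evens (behead u)) = size u.
Proof.
rewrite evensE evensbE -(size_sel (fun i => ~~ odd i) u); congr (_ + _).
by congr size; apply: eq_sel => i; rewrite negbK.
Qed.

Lemma horton_size j H : horton j H -> size H = 2 ^ j.
Proof. by case: j => [|j] []. Qed.

Lemma main c m : forall j t, sorted leX t -> horton j.+1 t -> (m < j)%N ->
  horton j (pr m c t).
Proof.
elim: m => [|m IH] j t st ht mj.
  case: ht => _ _ _ _ [he ho _].
  rewrite /S_even /S_odd xsort_id // -?evensE -?evensbE in he ho.
  case: c.
    have -> : pr 0 true t = sel (fun i => ~~ odd i) t.
      by apply: eq_sel => i; rewrite expn0 divn1; case: (odd i).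
    by rewrite -evensE.
  have -> : pr 0 false t = sel odd t.
    by apply: eq_sel => i; rewrite expn0 divn1; case: (odd i).
  by rewrite -evensbE.
case: j mj ht => // j mj [sH uH dH nH [he ho ha]].
have sp := pr_sorted m.+1 c st.
have se : S_even (pr m.+1 c t) = pr m c (S_even t).
  by rewrite /S_even !xsort_id // evens_pr.
have so : S_odd (pr m.+1 c t) = pr m c (S_odd t).
  by rewrite /S_odd !xsort_id // odds_pr.
have sse : sorted leX (S_even t) by rewrite /S_even; apply: evens_sorted; apply: sorted_xsort.
have sso : sorted leX (S_odd t) by rewrite /S_odd; apply: evensb_sorted; apply: sorted_xsort.
have he' := IH j _ sse he mj.
have ho' := IH j _ sso ho mj.
have sub := sel_subseq (fun i => odd (i %/ 2 ^ m.+1) != c) t.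
split.
- rewrite -size_evens; rewrite /S_even /S_odd xsort_id // in se so.
  by rewrite se so !(horton_size he') (horton_size ho') addnn -mul2n -expnS.
- exact: subseq_uniq sub uH.
- exact: subseq_uniq (map_subseq fst sub) dH.
- by move=> p q r pP qP rP; apply: nH; apply: (mem_subseq sub).
- rewrite se so; split => //.
  by apply: high_above_sub ha => x; apply: (mem_subseq (sel_subseq _ _)).
Qed.

From mathcomp Require Import zify.

Theorem lemma4 (k l : nat) (P : seq pt) (c : bool) :
  isothetic_horton k P -> (1 <= l)%N -> (l <= k - 1)%N ->
  let P' := prune k l c P in
  isothetic_horton (k - 1) P' /\
  ((l <= k - 3)%N ->
   forall (l' : nat) (b' : seq bool),
     (l < l')%N -> (l' <= k - 1)%N -> size b' = ((k - 1) - l')%N ->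
     exists b : seq bool,
       [/\ size b = (k - l'.+1)%N,
           {subset vertex P' b' <= vertex P b} &
           ((0 < size b')%N -> (2 < 2 ^ l')%N ->
              {subset Svert P' b' <= Svert P b})]).
Proof.
move=> hP l1 lk; set P' := prune k l c P; rewrite /isothetic_horton in hP *.
set s := xsort P.
have sP : sorted leX s by apply: sorted_xsort.
have pPs : perm_eq P s by rewrite perm_sym /s xsortE perm_sort.
have us : uniq s by rewrite -(perm_uniq pPs); case: k hP {lk P'} => [|k] [].
set m := (k - l - 1)%N.
have hkl : (k - l = m.+1)%N by rewrite /m; lia.
have eP' : P' = filter (fun p => odd (index p s %/ 2 ^ m) != c) P.
  rewrite /P' /prune hkl; apply: eq_in_filter => p pP.
  congr negb; rewrite -(exists_bits m c (index p s)); apply: eq_existsb => b.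
  congr andb; rewrite vertex_xsort; last by rewrite -size_eq0 size_tuple.
  rewrite -/s vertex_sel // mem_sel // -(perm_mem pPs) pP.
  by [].
have xP' : xsort P' = pr m c s.
  rewrite eP' xsortE -filter_sort; [|exact: leX_total|exact: leX_trans].
  by rewrite -xsortE -/s; exact: (filter_idx (fun i => odd (i %/ 2 ^ m) != c) us).
split.
  apply: (@horton_perm _ (xsort P')); last by rewrite xsortE perm_sort.
  rewrite xP'.
  have ek : k = (k - 1).+1 by lia.
  have hs : horton k s by apply: horton_perm hP pPs.
  rewrite ek in hs.
  apply: main => //; rewrite /m; lia.
move=> _ l' b' ll' l'k sb; exists b'; split.
- rewrite sb; lia.
- case: b' sb => [|d b] sb.
    by move=> x /=; rewrite eP' mem_filter => /andP [].
  rewrite vertex_xsort // xP' (vertex_xsort P) // -/s.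
  apply: vertex_pr_sub => //; rewrite sb /m; lia.
- move=> _ _; rewrite /Svert.
  have ne : rcons b' (~~ last false b') != [::] by rewrite -size_eq0 size_rcons.
  rewrite vertex_xsort // xP' (vertex_xsort P) // -/s.
  apply: vertex_pr_sub => //; rewrite size_rcons sb /m; lia.
Qed.
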